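(* Let $\theta\in\pi(\mathbb{Q}\setminus\mathbb{Z})$, $\mu\in\mathbb{C}\setminus\{0,1\}$ and $a,b\in\mathbb{C}^n$ with $a\neq b$, and let $G$ be the group generated by $f=(a,e^{i\theta})$ and $g=(b,\mu)$. Then $G(a)$ is closed and discrete in $\mathbb{C}^n$ if and only if $G\subset\mathcal{S}_2\mathcal{R}_n$ or $G\subset\mathcal{S}_3\mathcal{R}_n$.
   Context: For $c\in\mathbb{C}^n$ and $\nu\in\mathbb{C}\setminus\{0,1\}$, $(c,\nu)$ denotes the map $z\mapsto\nu(z-c)+c$ of $\mathbb{C}^n$. $H_2=(\frac{\pi}{2}+\pi\mathbb{Z})\cup\pi\mathbb{Z}$, $F_2=\{e^{ix}:x\in H_2\}$, $H_3=(\frac{\pi}{3}+\pi\mathbb{Z})\cup(-\frac{\pi}{3}+\pi\mathbb{Z})\cup\pi\mathbb{Z}$, $F_3=\{e^{ix}:x\in H_3\}$; for $i\in\{2,3\}$, $\mathcal{S}_i\mathcal{R}_n=\{z\mapsto\lambda z+v:\lambda\in F_i,\ v\in\mathbb{C}^n\}$. $G(a)=\{h(a):h\in G\}$. *)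

(* Defs.v *)
From Stdlib Require Import Reals Lra ZArith.
Open Scope R_scope.

Definition Cx : Type := (R * R)%type.
Definition Czero : Cx := (0, 0).
Definition Cone : Cx := (1, 0).
Definition Cadd (z w : Cx) : Cx := (fst z + fst w, snd z + snd w).
Definition Copp (z : Cx) : Cx := (- fst z, - snd z).
Definition Csub (z w : Cx) : Cx := Cadd z (Copp w).
Definition Cmul (z w : Cx) : Cx :=
  (fst z * fst w - snd z * snd w, fst z * snd w + snd z * fst w).
Definition Cnorm2 (z : Cx) : R := fst z * fst z + snd z * snd z.
Definition Cinv (z : Cx) : Cx := (fst z / Cnorm2 z, - snd z / Cnorm2 z).
Definition Cexpi (x : R) : Cx := (cos x, sin x).

(* ---------- Cx^n : vectors are nat -> Cx, only coordinates i < n matter ---------- *)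
Definition vec : Type := nat -> Cx.
Definition veq (n : nat) (z w : vec) : Prop := forall i, (i < n)%nat -> z i = w i.

Fixpoint sumR (n : nat) (f : nat -> R) : R :=
  match n with O => 0 | S m => sumR m f + f m end.

Definition vdist (n : nat) (z w : vec) : R :=
  sqrt (sumR n (fun i => Cnorm2 (Csub (z i) (w i)))).

(* Subsets of Cx^n are predicates on vec, compatible with veq. *)
Definition closed_in (n : nat) (S : vec -> Prop) : Prop :=
  forall z : vec,
    (forall eps, 0 < eps -> exists w, S w /\ vdist n z w < eps) -> S z.
Definition discrete_in (n : nat) (S : vec -> Prop) : Prop :=
  forall z : vec, S z ->
    exists eps, 0 < eps /\ forall w, S w -> vdist n z w < eps -> veq n w z.

Definition cmap (c : vec) (nu : Cx) : vec -> vec :=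
  fun z i => Cadd (Cmul nu (Csub (z i) (c i))) (c i).

Inductive in_group2 (a : vec) (la : Cx) (b : vec) (mu : Cx) : (vec -> vec) -> Prop :=
| ig_id : in_group2 a la b mu (fun z => z)
| ig_f  : forall h, in_group2 a la b mu h ->
            in_group2 a la b mu (fun z => cmap a la (h z))
| ig_fi : forall h, in_group2 a la b mu h ->
            in_group2 a la b mu (fun z => cmap a (Cinv la) (h z))
| ig_g  : forall h, in_group2 a la b mu h ->
            in_group2 a la b mu (fun z => cmap b mu (h z))
| ig_gi : forall h, in_group2 a la b mu h ->
            in_group2 a la b mu (fun z => cmap b (Cinv mu) (h z)).

Definition orbit (n : nat) (G : (vec -> vec) -> Prop) (p : vec) : vec -> Prop :=
  fun z => exists h, G h /\ veq n z (h p).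

Definition H2 (x : R) : Prop :=
  exists k : Z, x = PI / 2 + IZR k * PI \/ x = IZR k * PI.
Definition H3 (x : R) : Prop :=
  exists k : Z, x = PI / 3 + IZR k * PI \/ x = - (PI / 3) + IZR k * PI
                \/ x = IZR k * PI.
Definition F2 (l : Cx) : Prop := exists x, H2 x /\ l = Cexpi x.
Definition F3 (l : Cx) : Prop := exists x, H3 x /\ l = Cexpi x.

Definition in_SR (F : Cx -> Prop) (n : nat) (h : vec -> vec) : Prop :=
  exists (l : Cx) (v : vec), F l /\
    forall z, veq n (h z) (fun i => Cadd (Cmul l (z i)) (v i)).

Definition in_piQnotZ (theta : R) : Prop :=
  exists p q : Z, q <> 0%Z /\ ~ (Z.divide q p) /\ theta = PI * IZR p / IZR q.

(* Main.v *)
Require Import Defs.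
From Stdlib Require Import Reals ZArith Lra Lia Nsatz Classical.
Open Scope R_scope.

Ltac cx := unfold Csub, Cadd, Copp, Cmul, Czero, Cone, Cnorm2 in *; simpl in *.

Lemma Cnorm2_mul z w : Cnorm2 (Cmul z w) = Cnorm2 z * Cnorm2 w.
Proof. destruct z, w; cx; ring. Qed.

Lemma Cnorm2_nonneg z : 0 <= Cnorm2 z.
Proof. destruct z; cx; nra. Qed.

Lemma Cnorm2_0 z : Cnorm2 z = 0 -> z = Czero.
Proof. destruct z as [x y]; cx; intro H. assert (x = 0) by nra. assert (y = 0) by nra. subst; auto. Qed.

Lemma Cnorm2_pos z : z <> Czero -> 0 < Cnorm2 z.
Proof. intro H. destruct (Cnorm2_nonneg z); auto. exfalso; apply H, Cnorm2_0; auto. Qed.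

Lemma Cinv_norm1 z : Cnorm2 z = 1 -> Cinv z = (fst z, - snd z).
Proof. intro H. unfold Cinv. rewrite H. f_equal; field. Qed.

Inductive Gr (la lai mu mui : Cx) : Cx -> Cx -> Prop :=
| gr_id : Gr la lai mu mui Cone Czero
| gr_f : forall l v, Gr la lai mu mui l v -> Gr la lai mu mui (Cmul la l) (Cmul la v)
| gr_fi : forall l v, Gr la lai mu mui l v -> Gr la lai mu mui (Cmul lai l) (Cmul lai v)
| gr_g : forall l v, Gr la lai mu mui l v ->
    Gr la lai mu mui (Cmul mu l) (Cadd (Cmul mu (Csub v Cone)) Cone)
| gr_gi : forall l v, Gr la lai mu mui l v ->
    Gr la lai mu mui (Cmul mui l) (Cadd (Cmul mui (Csub v Cone)) Cone).

Lemma Gr_ext la lai mu mui l v l' v' : Gr la lai mu mui l v -> l = l' -> v = v' -> Gr la lai mu mui l' v'.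
Proof. intros H -> ->; exact H. Qed.

Lemma Gr_comp la lai mu mui l1 v1 l2 v2 : Gr la lai mu mui l1 v1 -> Gr la lai mu mui l2 v2 ->
  Gr la lai mu mui (Cmul l1 l2) (Cadd (Cmul l1 v2) v1).
Proof.
  intros H1 H2; induction H1.
  - eapply Gr_ext; [exact H2| |]; destruct l2, v2; cx; f_equal; ring.
  - eapply Gr_ext; [apply gr_f, IHGr| |]; destruct l,v,l2,v2,la; cx; f_equal; ring.
  - eapply Gr_ext; [apply gr_fi, IHGr| |]; destruct l,v,l2,v2,lai; cx; f_equal; ring.
  - eapply Gr_ext; [apply gr_g, IHGr| |]; destruct l,v,l2,v2,mu; cx; f_equal; ring.
  - eapply Gr_ext; [apply gr_gi, IHGr| |]; destruct l,v,l2,v2,mui; cx; f_equal; ring.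
Qed.

Definition Pt (a b : vec) (v : Cx) : vec := fun i => Cadd (a i) (Cmul v (Csub (b i) (a i))).

Lemma G2Gr a la b mu h : in_group2 a la b mu h ->
  exists l v, Gr la (Cinv la) mu (Cinv mu) l v /\
    forall z i, h z i = Cadd (Cmul l (Csub (z i) (a i))) (Pt a b v i).
Proof.
  induction 1 as [|h H [l [v [Hg He]]]|h H [l [v [Hg He]]]|h H [l [v [Hg He]]]|h H [l [v [Hg He]]]].
  - exists Cone, Czero; split; [constructor|]. intros z i; unfold Pt.
    destruct (z i), (a i), (b i); cx; f_equal; ring.
  - eexists; eexists; split; [apply gr_f, Hg|]. intros z i; unfold cmap; rewrite He; unfold Pt.
    destruct (z i), (a i), (b i), l, v, la; cx; f_equal; ring.
  - eexists; eexists; split; [apply gr_fi, Hg|]. intros z i; unfold cmap; rewrite He; unfold Pt.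
    destruct (z i), (a i), (b i), l, v, (Cinv la); cx; f_equal; ring.
  - eexists; eexists; split; [apply gr_g, Hg|]. intros z i; unfold cmap; rewrite He; unfold Pt.
    destruct (z i), (a i), (b i), l, v, mu; cx; f_equal; ring.
  - eexists; eexists; split; [apply gr_gi, Hg|]. intros z i; unfold cmap; rewrite He; unfold Pt.
    destruct (z i), (a i), (b i), l, v, (Cinv mu); cx; f_equal; ring.
Qed.

Lemma Gr2G a la b mu l v : Gr la (Cinv la) mu (Cinv mu) l v ->
  exists h, in_group2 a la b mu h /\
    forall z i, h z i = Cadd (Cmul l (Csub (z i) (a i))) (Pt a b v i).
Proof.
  induction 1 as [|l v Hg [h [H He]]|l v Hg [h [H He]]|l v Hg [h [H He]]|l v Hg [h [H He]]].
  - exists (fun z => z); split; [constructor|]. intros z i; unfold Pt.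
    destruct (z i), (a i), (b i); cx; f_equal; ring.
  - eexists; split; [apply ig_f, H|]. intros z i; unfold cmap; rewrite He; unfold Pt.
    destruct (z i), (a i), (b i), l, v, la; cx; f_equal; ring.
  - eexists; split; [apply ig_fi, H|]. intros z i; unfold cmap; rewrite He; unfold Pt.
    destruct (z i), (a i), (b i), l, v, (Cinv la); cx; f_equal; ring.
  - eexists; split; [apply ig_g, H|]. intros z i; unfold cmap; rewrite He; unfold Pt.
    destruct (z i), (a i), (b i), l, v, mu; cx; f_equal; ring.
  - eexists; split; [apply ig_gi, H|]. intros z i; unfold cmap; rewrite He; unfold Pt.
    destruct (z i), (a i), (b i), l, v, (Cinv mu); cx; f_equal; ring.
Qed.

Lemma sumR_ext n f g : (forall i, (i < n)%nat -> f i = g i) -> sumR n f = sumR n g.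
Proof. induction n; simpl; intros; auto. rewrite IHn, H; auto; intros; apply H; lia. Qed.

Lemma sumR_scal n c f : sumR n (fun i => c * f i) = c * sumR n f.
Proof. induction n; simpl; [ring|rewrite IHn; ring]. Qed.

Lemma sumR_nonneg n f : (forall i, 0 <= f i) -> 0 <= sumR n f.
Proof. induction n; simpl; intros; [lra|]. specialize (IHn H); specialize (H n); lra. Qed.

Lemma sumR_term n f i : (forall i, 0 <= f i) -> (i < n)%nat -> f i <= sumR n f.
Proof.
  induction n; simpl; intros H Hi; [lia|].
  destruct (Nat.eq_dec i n).
  - subst. pose proof (sumR_nonneg n f H); lra.
  - pose proof (IHn H ltac:(lia)). specialize (H n); lra.
Qed.

Lemma vdist_nonneg n z w : 0 <= vdist n z w.
Proof. apply sqrt_pos. Qed.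

Lemma vdist_sq n z w : vdist n z w * vdist n z w = sumR n (fun i => Cnorm2 (Csub (z i) (w i))).
Proof. unfold vdist. apply sqrt_sqrt, sumR_nonneg; intros; apply Cnorm2_nonneg. Qed.

Lemma coord_le n z w i : (i < n)%nat -> Cnorm2 (Csub (z i) (w i)) <= vdist n z w * vdist n z w.
Proof. intro. rewrite vdist_sq. apply (sumR_term n (fun i => Cnorm2 (Csub (z i) (w i)))); auto.
  intros; apply Cnorm2_nonneg. Qed.

Lemma vdist_veq_l n z z' w : veq n z z' -> vdist n z w = vdist n z' w.
Proof. intro H; unfold vdist; f_equal; apply sumR_ext; intros; rewrite H; auto. Qed.
Lemma vdist_veq_r n z w w' : veq n w w' -> vdist n z w = vdist n z w'.
Proof. intro H; unfold vdist; f_equal; apply sumR_ext; intros; rewrite H; auto. Qed.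

Lemma sumR_zero n f : (forall i, 0 <= f i) -> sumR n f = 0 -> forall i, (i < n)%nat -> f i = 0.
Proof. intros H H0 i Hi. pose proof (sumR_term n f i H Hi). specialize (H i). lra. Qed.

Lemma vdist0 n z w : vdist n z w = 0 -> veq n z w.
Proof.
  intro H. intros i Hi. pose proof (coord_le n z w i Hi). rewrite H in H0.
  assert (Cnorm2 (Csub (z i) (w i)) = 0) by (pose proof (Cnorm2_nonneg (Csub (z i) (w i))); lra).
  apply Cnorm2_0 in H1. destruct (z i), (w i); cx. injection H1; intros.
  f_equal; lra.
Qed.

Definition Sd n (a b : vec) := sumR n (fun i => Cnorm2 (Csub (b i) (a i))).

Lemma vdist_Pt n a b v v' : vdist n (Pt a b v) (Pt a b v') = sqrt (Cnorm2 (Csub v v') * Sd n a b).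
Proof.
  unfold vdist, Sd. f_equal. rewrite <- sumR_scal. apply sumR_ext; intros.
  rewrite <- Cnorm2_mul. f_equal. unfold Pt. destruct (a i) as [p1 p2], (b i) as [q1 q2], v as [r1 r2], v' as [s1 s2]. cx. f_equal; ring.
Qed.

Lemma orbit_char n a la b mu z :
  orbit n (in_group2 a la b mu) a z <->
  exists l v, Gr la (Cinv la) mu (Cinv mu) l v /\ veq n z (Pt a b v).
Proof.
  split.
  - intros [h [Hh Hz]]. destruct (G2Gr a la b mu h Hh) as [l [v [Hg He]]].
    exists l, v; split; auto. intros i Hi. rewrite Hz, He; auto. unfold Pt; destruct (a i), (b i), l, v; cx; f_equal; ring.
  - intros [l [v [Hg Hz]]]. destruct (Gr2G a la b mu l v Hg) as [h [Hh He]].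
    exists h; split; auto. intros i Hi. rewrite Hz, He; auto. unfold Pt; destruct (a i), (b i), l, v; cx; f_equal; ring.
Qed.

Lemma exists_coord n (a b : vec) : ~ veq n a b -> exists i, (i < n)%nat /\ Csub (b i) (a i) <> Czero.
Proof.
  intro H. apply NNPP; intro H'. apply H. intros i Hi.
  destruct (classic (Csub (b i) (a i) = Czero)) as [E|E].
  - destruct (a i), (b i); cx. injection E; intros; f_equal; lra.
  - exfalso; apply H'; eauto.
Qed.

Lemma Sd_pos n a b : ~ veq n a b -> 0 < Sd n a b.
Proof.
  intro H. destruct (exists_coord n a b H) as [i [Hi Hd]].
  pose proof (sumR_term n (fun i => Cnorm2 (Csub (b i) (a i))) i (fun _ => Cnorm2_nonneg _) Hi).
  pose proof (Cnorm2_pos _ Hd). unfold Sd; simpl in *; lra.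
Qed.

Lemma vdist_self n z : vdist n z z = 0.
Proof. unfold vdist. rewrite <- sqrt_0. f_equal. induction n; simpl; auto. rewrite IHn.
  destruct (z n); cx; ring. Qed.

Lemma Pt_inj n a b v v' : ~ veq n a b -> veq n (Pt a b v) (Pt a b v') -> v = v'.
Proof.
  intros H E. assert (vdist n (Pt a b v) (Pt a b v') = 0).
  { rewrite (vdist_veq_r n _ _ (Pt a b v)). apply vdist_self. intros i Hi; symmetry; auto. }
  rewrite vdist_Pt in H0. apply sqrt_eq_0 in H0.
  2:{ apply Rmult_le_pos; [apply Cnorm2_nonneg| left; apply Sd_pos; auto]. }
  pose proof (Sd_pos n a b H). assert (Cnorm2 (Csub v v') = 0) by nra.
  apply Cnorm2_0 in H2. destruct v, v'; cx; injection H2; intros; f_equal; lra.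
Qed.

Lemma sqrt_lt_sq x e : 0 <= x -> 0 < e -> x < e * e -> sqrt x < e.
Proof. intros. rewrite <- (sqrt_square e) by lra. apply sqrt_lt_1_alt; lra. Qed.

Lemma par_ineq c1 c2 : Cnorm2 (Csub c2 c1) <= 2 * Cnorm2 c1 + 2 * Cnorm2 c2.
Proof. destruct c1 as [x1 y1], c2 as [x2 y2]; cx. pose proof (Rle_0_sqr (x1+x2)); pose proof (Rle_0_sqr (y1+y2)); unfold Rsqr in *; nra. Qed.

Lemma lattice_cd n a la b mu (Lam : Cx -> Prop) :
  ~ veq n a b ->
  (forall l v, Gr la (Cinv la) mu (Cinv mu) l v -> Lam v) ->
  (forall u w, Lam u -> Lam w -> u <> w -> 1 <= Cnorm2 (Csub u w)) ->
  closed_in n (orbit n (in_group2 a la b mu) a) /\ discrete_in n (orbit n (in_group2 a la b mu) a).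
Proof.
  intros Hab HL Hsep. pose proof (Sd_pos n a b Hab) as HS. split.
  - intros z Hz. destruct (exists_coord n a b Hab) as [i0 [Hi0 Hd]].
    pose proof (Cnorm2_pos _ Hd) as HD.
    set (D0 := Cnorm2 (Csub (b i0) (a i0))) in *.
    set (eps := sqrt D0 / 2).
    assert (Heps : 0 < eps) by (unfold eps; pose proof (sqrt_lt_R0 D0 HD); lra).
    assert (Heps2 : eps * eps = D0 / 4).
    { unfold eps. replace (sqrt D0 / 2 * (sqrt D0 / 2)) with (sqrt D0 * sqrt D0 / 4) by field.
      rewrite sqrt_sqrt; lra. }
    destruct (Hz eps Heps) as [w1 [Hw1 Hd1]].
    apply orbit_char in Hw1. destruct Hw1 as [l1 [v1 [Hg1 He1]]].
    rewrite (vdist_veq_r n z w1 (Pt a b v1) He1) in Hd1.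
    assert (Hsmall : forall e, 0 < e -> vdist n z (Pt a b v1) < e).
    { intros e He. destruct (Hz (Rmin e eps)) as [w2 [Hw2 Hd2]].
      { apply Rmin_pos; auto. }
      apply orbit_char in Hw2. destruct Hw2 as [l2 [v2 [Hg2 He2]]].
      rewrite (vdist_veq_r n z w2 (Pt a b v2) He2) in Hd2.
      destruct (classic (v1 = v2)) as [E|E].
      + subst v2. pose proof (Rmin_l e eps); lra.
      + exfalso. pose proof (Hsep v1 v2 (HL _ _ Hg1) (HL _ _ Hg2) E) as H1.
        pose proof (coord_le n z (Pt a b v1) i0 Hi0) as C1.
        pose proof (coord_le n z (Pt a b v2) i0 Hi0) as C2.
        pose proof (Rmin_r e eps).
        pose proof (vdist_nonneg n z (Pt a b v1)). pose proof (vdist_nonneg n z (Pt a b v2)).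
        assert (vdist n z (Pt a b v1) * vdist n z (Pt a b v1) < D0 / 4) as H7 by nra.
        assert (vdist n z (Pt a b v2) * vdist n z (Pt a b v2) < D0 / 4) as H8 by nra.
        pose proof (par_ineq (Csub (z i0) (Pt a b v1 i0)) (Csub (z i0) (Pt a b v2 i0))) as H6.
        replace (Csub (Csub (z i0) (Pt a b v2 i0)) (Csub (z i0) (Pt a b v1 i0)))
          with (Cmul (Csub v1 v2) (Csub (b i0) (a i0))) in H6.
        2:{ unfold Pt. destruct (z i0), (a i0), (b i0), v1, v2; cx; f_equal; ring. }
        rewrite Cnorm2_mul in H6. fold D0 in H6. nra. }
    assert (vdist n z (Pt a b v1) = 0).
    { pose proof (vdist_nonneg n z (Pt a b v1)). destruct H; auto.
      specialize (Hsmall _ H); lra. }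
    apply orbit_char. exists l1, v1; split; auto. apply vdist0; auto.
  - intros z Hz. apply orbit_char in Hz. destruct Hz as [l0 [v0 [Hg0 He0]]].
    exists (sqrt (Sd n a b)). split; [apply sqrt_lt_R0; auto|].
    intros w Hw Hdw. apply orbit_char in Hw. destruct Hw as [l [v [Hg He]]].
    rewrite (vdist_veq_l n z _ _ He0), (vdist_veq_r n _ _ _ He), vdist_Pt in Hdw.
    destruct (classic (v0 = v)) as [E|E].
    + subst. intros i Hi. rewrite He, He0; auto.
    + exfalso. pose proof (Hsep _ _ (HL _ _ Hg0) (HL _ _ Hg) E).
      assert (sqrt (Sd n a b) <= sqrt (Cnorm2 (Csub v0 v) * Sd n a b)).
      { apply sqrt_le_1_alt. nra. }
      lra.
Qed.

Lemma cos_sin_kpi_nat s m : (cos (s + INR m * PI) = cos s /\ sin (s + INR m * PI) = sin s) \/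
  (cos (s + INR m * PI) = - cos s /\ sin (s + INR m * PI) = - sin s).
Proof.
  induction m.
  - left. simpl. rewrite Rmult_0_l, Rplus_0_r. auto.
  - rewrite S_INR. replace (s + (INR m + 1) * PI) with ((s + INR m * PI) + PI) by ring.
    rewrite neg_cos, neg_sin. destruct IHm as [[-> ->]|[-> ->]]; [right|left]; split; ring.
Qed.

Lemma cos_sin_mkpi_nat s m : (cos (s - INR m * PI) = cos s /\ sin (s - INR m * PI) = sin s) \/
  (cos (s - INR m * PI) = - cos s /\ sin (s - INR m * PI) = - sin s).
Proof.
  induction m.
  - left. simpl. rewrite Rmult_0_l, Rminus_0_r. auto.
  - rewrite S_INR.
    assert (E1 : cos (s - (INR m + 1) * PI) = - cos (s - INR m * PI)).
    { replace (s - INR m * PI) with ((s - (INR m + 1) * PI) + PI) by ring. rewrite neg_cos; ring. }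
    assert (E2 : sin (s - (INR m + 1) * PI) = - sin (s - INR m * PI)).
    { replace (s - INR m * PI) with ((s - (INR m + 1) * PI) + PI) by ring. rewrite neg_sin; ring. }
    rewrite E1, E2. destruct IHm as [[-> ->]|[-> ->]]; [right|left]; split; ring.
Qed.

Lemma Cexpi_kpi s k : Cexpi (s + IZR k * PI) = (cos s, sin s) \/ Cexpi (s + IZR k * PI) = (- cos s, - sin s).
Proof.
  unfold Cexpi. destruct (Z.le_gt_cases 0 k).
  - rewrite <- (Z2Nat.id k) by lia. rewrite <- INR_IZR_INZ.
    destruct (cos_sin_kpi_nat s (Z.to_nat k)) as [[-> ->]|[-> ->]]; auto.
  - replace k with (- Z.of_nat (Z.to_nat (- k)))%Z by lia. rewrite opp_IZR, <- INR_IZR_INZ.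
    replace (s + - INR (Z.to_nat (- k)) * PI) with (s - INR (Z.to_nat (- k)) * PI) by ring.
    destruct (cos_sin_mkpi_nat s (Z.to_nat (-k))) as [[-> ->]|[-> ->]]; auto.
Qed.

Definition U2 (x : Cx) : Prop := x = (1,0) \/ x = (0,1) \/ x = (-1,0) \/ x = (0,-1).
Definition s3 := sqrt 3 / 2.
Definition U3 (x : Cx) : Prop := x = (1,0) \/ x = (-1,0) \/ x = (1/2, s3) \/ x = (-1/2, -s3)
  \/ x = (1/2, -s3) \/ x = (-1/2, s3).

Lemma s3_sq : s3 * s3 = 3/4.
Proof. unfold s3. replace (sqrt 3 / 2 * (sqrt 3 / 2)) with (sqrt 3 * sqrt 3 / 4) by field.
  rewrite sqrt_sqrt; lra. Qed.

Lemma F2_U2 x : F2 x -> U2 x.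
Proof.
  intros [t [[k [-> | ->]] ->]].
  - destruct (Cexpi_kpi (PI/2) k) as [-> | ->]; rewrite cos_PI2, sin_PI2; unfold U2; rewrite ?Ropp_0; auto.
  - replace (IZR k * PI) with (0 + IZR k * PI) by ring.
    destruct (Cexpi_kpi 0 k) as [-> | ->]; rewrite cos_0, sin_0; unfold U2; rewrite ?Ropp_0; auto.
Qed.

Lemma F3_U3 x : F3 x -> U3 x.
Proof.
  intros [t [[k [-> | [-> | ->]]] ->]].
  - destruct (Cexpi_kpi (PI/3) k) as [-> | ->]; rewrite cos_PI3, sin_PI3; fold s3; unfold U3;
    replace (1/2) with (1/2) by auto; [tauto|]. replace (- (1/2)) with (-1/2) by field; tauto.
  - destruct (Cexpi_kpi (-(PI/3)) k) as [-> | ->]; rewrite cos_neg, sin_neg, cos_PI3, sin_PI3; fold s3; unfold U3; [tauto|].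
    rewrite Ropp_involutive. replace (- (1/2)) with (-1/2) by field; tauto.
  - replace (IZR k * PI) with (0 + IZR k * PI) by ring.
    destruct (Cexpi_kpi 0 k) as [-> | ->]; rewrite cos_0, sin_0; unfold U3; rewrite ?Ropp_0; auto.
Qed.

Lemma U2_inv x : U2 x -> U2 (Cinv x).
Proof.
  intro H. assert (Cnorm2 x = 1) by (unfold U2 in H; destruct H as [->|[->|[->| ->]]]; cx; ring).
  rewrite Cinv_norm1 by auto. unfold U2 in *; destruct H as [->|[->|[->| ->]]]; simpl; rewrite ?Ropp_0, ?Ropp_involutive; auto. all: right; left; f_equal; ring.
Qed.

Lemma U3_inv x : U3 x -> U3 (Cinv x).
Proof.
  intro H. assert (Cnorm2 x = 1).
  { pose proof s3_sq. unfold U3 in H; destruct H as [->|[->|[->|[->|[->| ->]]]]]; cx; lra. }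
  rewrite Cinv_norm1 by auto. unfold U3 in *; destruct H as [->|[->|[->|[->|[->| ->]]]]]; simpl;
  rewrite ?Ropp_0, ?Ropp_involutive; tauto.
Qed.

Definition ZI (z : Cx) : Prop := exists m1 m2 : Z, z = (IZR m1, IZR m2).
Definition ZW (z : Cx) : Prop := exists m1 m2 : Z, z = (IZR m1 + IZR m2 / 2, IZR m2 * s3).

Lemma U2_ZI x : U2 x -> ZI x.
Proof. unfold U2, ZI; intros [->|[->|[->| ->]]]; [exists 1%Z, 0%Z|exists 0%Z, 1%Z|exists (-1)%Z, 0%Z|exists 0%Z, (-1)%Z]; auto. Qed.

Lemma U3_ZW x : U3 x -> ZW x.
Proof.
  unfold U3, ZW; intros [->|[->|[->|[->|[->| ->]]]]];
  [exists 1%Z, 0%Z|exists (-1)%Z, 0%Z|exists 0%Z, 1%Z|exists 0%Z, (-1)%Z|exists 1%Z, (-1)%Z|exists (-1)%Z, 1%Z];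
  f_equal; simpl; field.
Qed.

Lemma ZI_mul u w : ZI u -> ZI w -> ZI (Cmul u w).
Proof. intros [m1 [m2 ->]] [k1 [k2 ->]]. exists (m1*k1 - m2*k2)%Z, (m1*k2+m2*k1)%Z. cx.
  rewrite minus_IZR, plus_IZR, !mult_IZR; auto. Qed.
Lemma ZI_add u w : ZI u -> ZI w -> ZI (Cadd u w).
Proof. intros [m1 [m2 ->]] [k1 [k2 ->]]. exists (m1+k1)%Z, (m2+k2)%Z. cx. rewrite !plus_IZR; auto. Qed.
Lemma ZI_sub u w : ZI u -> ZI w -> ZI (Csub u w).
Proof. intros [m1 [m2 ->]] [k1 [k2 ->]]. exists (m1-k1)%Z, (m2-k2)%Z. cx. rewrite !minus_IZR; auto. Qed.

Lemma ZW_mul u w : ZW u -> ZW w -> ZW (Cmul u w).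
Proof. intros [m1 [m2 ->]] [k1 [k2 ->]]. exists (m1*k1 - m2*k2)%Z, (m1*k2+m2*k1+m2*k2)%Z. cx.
  rewrite minus_IZR, !plus_IZR, !mult_IZR. f_equal; [|field].
  replace (IZR m2 * s3 * (IZR k2 * s3)) with (IZR m2 * IZR k2 * (s3*s3)) by ring. rewrite s3_sq; field. Qed.
Lemma ZW_add u w : ZW u -> ZW w -> ZW (Cadd u w).
Proof. intros [m1 [m2 ->]] [k1 [k2 ->]]. exists (m1+k1)%Z, (m2+k2)%Z. cx. rewrite !plus_IZR; f_equal; field. Qed.
Lemma ZW_sub u w : ZW u -> ZW w -> ZW (Csub u w).
Proof. intros [m1 [m2 ->]] [k1 [k2 ->]]. exists (m1-k1)%Z, (m2-k2)%Z. cx. rewrite !minus_IZR; f_equal; field. Qed.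

Lemma ZI_sep u w : ZI u -> ZI w -> u <> w -> 1 <= Cnorm2 (Csub u w).
Proof.
  intros Hu Hw E. destruct (ZI_sub u w Hu Hw) as [m1 [m2 Hm]]. rewrite Hm.
  assert ((m1, m2) <> (0, 0))%Z.
  { intro X; injection X; intros; subst. apply E. destruct u, w; cx; injection Hm; intros; f_equal; lra. }
  assert (1 <= m1*m1 + m2*m2)%Z.
  { destruct (Z.eq_dec m1 0); destruct (Z.eq_dec m2 0); subst; try congruence; nia. }
  cx. rewrite <- !mult_IZR, <- plus_IZR. apply IZR_le in H0. auto.
Qed.

Lemma ZW_sep u w : ZW u -> ZW w -> u <> w -> 1 <= Cnorm2 (Csub u w).
Proof.
  intros Hu Hw E. destruct (ZW_sub u w Hu Hw) as [m1 [m2 Hm]]. rewrite Hm.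
  assert ((m1, m2) <> (0, 0))%Z.
  { intro X; injection X; intros; subst. apply E. destruct u, w; cx; injection Hm; intros.
    f_equal; simpl in *; lra. }
  assert (1 <= m1*m1 + m1*m2 + m2*m2)%Z.
  { destruct (Z.eq_dec m1 0); destruct (Z.eq_dec m2 0); subst; try congruence; nia. }
  apply IZR_le in H0. rewrite !plus_IZR, !mult_IZR in H0. cx. pose proof s3_sq.
  replace ((IZR m1 + IZR m2 / 2) * (IZR m1 + IZR m2 / 2) + IZR m2 * s3 * (IZR m2 * s3))
    with (IZR m1 * IZR m1 + IZR m1 * IZR m2 + IZR m2 * IZR m2).
  lra. replace (IZR m2 * s3 * (IZR m2 * s3)) with (IZR m2 * IZR m2 * (s3*s3)) by ring. rewrite s3_sq; field.
Qed.

Lemma Gr_in (Lam : Cx -> Prop) la lai mu mui :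
  Lam Cone -> Lam Czero -> Lam la -> Lam lai -> Lam mu -> Lam mui ->
  (forall u w, Lam u -> Lam w -> Lam (Cmul u w)) ->
  (forall u w, Lam u -> Lam w -> Lam (Cadd u w)) ->
  (forall u w, Lam u -> Lam w -> Lam (Csub u w)) ->
  forall l v, Gr la lai mu mui l v -> Lam l /\ Lam v.
Proof.
  intros H1 H0 Hla Hlai Hmu Hmui HM HA HS l v H; induction H as [| | | |]; try destruct IHGr; split; auto.
Qed.

Lemma SR_extract F n c nu : (exists i, (i < n)%nat) -> in_SR F n (fun z => cmap c nu z) -> F nu.
Proof.
  intros [i Hi] [l [v [Fl H]]].
  pose proof (H c i Hi) as E1. pose proof (H (fun j => Cadd (c j) Cone) i Hi) as E2.
  unfold cmap in *. simpl in *. replace nu with l; auto.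
  destruct (c i), l, v, nu; cx. injection E1; injection E2; intros. f_equal; nra.
Qed.

Lemma easy_dir n theta mu a b :
  ~ veq n a b ->
  ((forall h, in_group2 a (Cexpi theta) b mu h -> in_SR F2 n h) \/
   (forall h, in_group2 a (Cexpi theta) b mu h -> in_SR F3 n h)) ->
  closed_in n (orbit n (in_group2 a (Cexpi theta) b mu) a) /\
  discrete_in n (orbit n (in_group2 a (Cexpi theta) b mu) a).
Proof.
  intros Hab H. set (la := Cexpi theta) in *.
  assert (Hn : exists i, (i < n)%nat) by (destruct (exists_coord n a b Hab) as [i [Hi _]]; eauto).
  destruct H as [H|H].
  - assert (Hl : U2 la) by (apply F2_U2, (SR_extract F2 n a); auto; exact (H _ (ig_f _ _ _ _ _ (ig_id _ _ _ _)))).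
    assert (Hm : U2 mu) by (apply F2_U2, (SR_extract F2 n b); auto; exact (H _ (ig_g _ _ _ _ _ (ig_id _ _ _ _)))).
    apply (lattice_cd n a la b mu ZI Hab).
    + intros l v Hg. apply (Gr_in ZI la (Cinv la) mu (Cinv mu)) in Hg; try tauto;
      auto using U2_ZI, U2_inv, ZI_mul, ZI_add, ZI_sub.
      * exists 1%Z, 0%Z; auto.
      * exists 0%Z, 0%Z; auto.
    + apply ZI_sep.
  - assert (Hl : U3 la) by (apply F3_U3, (SR_extract F3 n a); auto; exact (H _ (ig_f _ _ _ _ _ (ig_id _ _ _ _)))).
    assert (Hm : U3 mu) by (apply F3_U3, (SR_extract F3 n b); auto; exact (H _ (ig_g _ _ _ _ _ (ig_id _ _ _ _)))).
    apply (lattice_cd n a la b mu ZW Hab).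
    + intros l v Hg. apply (Gr_in ZW la (Cinv la) mu (Cinv mu)) in Hg; try tauto;
      auto using U3_ZW, U3_inv, ZW_mul, ZW_add, ZW_sub.
      * exists 1%Z, 0%Z; unfold Cone; f_equal; simpl; field.
      * exists 0%Z, 0%Z; unfold Czero; f_equal; simpl; field.
    + apply ZW_sep.
Qed.

Lemma int_range x y m : x*x + y*y = 1 -> 2 * x = IZR m -> (x, y) <> Cone ->
  (m = -2 \/ m = -1 \/ m = 0 \/ m = 1)%Z.
Proof.
  intros N E H. assert (-2 <= IZR m <= 2) by nra.
  destruct H0 as [H1 H2]. apply le_IZR in H1; apply le_IZR in H2.
  assert (m <> 2%Z).
  { intro; subst. assert (x = 1) by lra. subst. assert (y = 0) by nra. subst; auto. }
  lia.
Qed.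

Lemma no_sq12 k : IZR k * IZR k <> 12.
Proof. intro H. rewrite <- mult_IZR in H. apply eq_IZR in H. assert (-4 < k < 4)%Z by nia.
  assert (k = -3 \/ k = -2 \/ k = -1 \/ k = 0 \/ k = 1 \/ k = 2 \/ k = 3)%Z as HH by lia.
  repeat destruct HH as [-> | HH]; simpl in H; try discriminate; subst; discriminate. Qed.

Lemma core x1 y1 x2 y2 m1 m2 m3 m4 :
  x1*x1 + y1*y1 = 1 -> x2*x2 + y2*y2 = 1 -> (x1,y1) <> Cone -> (x2,y2) <> Cone ->
  2 * x1 = IZR m1 -> 2 * x2 = IZR m2 ->
  2 * (x1*x2 - y1*y2) = IZR m3 -> 2 * (x1*x2 + y1*y2) = IZR m4 ->
  ((x1 = 0 \/ x1 = -1) /\ (x2 = 0 \/ x2 = -1)) \/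
  ((x1 = -1 \/ x1 = 1/2 \/ x1 = -1/2) /\ (x2 = -1 \/ x2 = 1/2 \/ x2 = -1/2)).
Proof.
  intros N1 N2 C1 C2 E1 E2 E3 E4.
  assert (K : IZR (m4 - m3) * IZR (m4 - m3) = 16 * (1 - (IZR m1/2)*(IZR m1/2)) * (1 - (IZR m2/2)*(IZR m2/2))).
  { rewrite minus_IZR, <- E3, <- E4, <- E1, <- E2.
    replace (2 * x1 / 2) with x1 by field. replace (2 * x2 / 2) with x2 by field. nsatz. }
  destruct (int_range _ _ _ N1 E1 C1) as [->|[->|[->| ->]]];
  destruct (int_range _ _ _ N2 E2 C2) as [->|[->|[->| ->]]];
  try (left; split; lra); try (right; split; lra);
  exfalso; apply (no_sq12 (m4 - m3)); rewrite K; lra.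
Qed.

Definition P2 (x : Cx) : Prop := exists k : Z, x = Cexpi (IZR k * (PI/2)).
Definition P3 (x : Cx) : Prop := exists k : Z, x = Cexpi (IZR k * (PI/3)).

Lemma Cexpi_add x y : Cmul (Cexpi x) (Cexpi y) = Cexpi (x + y).
Proof. unfold Cexpi, Cmul; simpl. rewrite cos_plus, sin_plus. f_equal; ring. Qed.

Lemma Cexpi_inv x : Cinv (Cexpi x) = Cexpi (- x).
Proof. rewrite Cinv_norm1. unfold Cexpi; simpl; rewrite cos_neg, sin_neg; auto.
  unfold Cexpi, Cnorm2; simpl. rewrite <- (sin2_cos2 x). unfold Rsqr; ring. Qed.

Lemma P2_mul u w : P2 u -> P2 w -> P2 (Cmul u w).
Proof. intros [k ->] [j ->]. exists (k + j)%Z. rewrite Cexpi_add, plus_IZR. f_equal; ring. Qed.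
Lemma P3_mul u w : P3 u -> P3 w -> P3 (Cmul u w).
Proof. intros [k ->] [j ->]. exists (k + j)%Z. rewrite Cexpi_add, plus_IZR. f_equal; ring. Qed.
Lemma P2_inv u : P2 u -> P2 (Cinv u).
Proof. intros [k ->]. exists (- k)%Z. rewrite Cexpi_inv, opp_IZR. f_equal; ring. Qed.
Lemma P3_inv u : P3 u -> P3 (Cinv u).
Proof. intros [k ->]. exists (- k)%Z. rewrite Cexpi_inv, opp_IZR. f_equal; ring. Qed.
Lemma P2_one : P2 Cone.
Proof. exists 0%Z. unfold Cexpi, Cone. rewrite Rmult_0_l, cos_0, sin_0; auto. Qed.
Lemma P3_one : P3 Cone.
Proof. exists 0%Z. unfold Cexpi, Cone. rewrite Rmult_0_l, cos_0, sin_0; auto. Qed.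

Lemma P2_F2 x : P2 x -> F2 x.
Proof.
  intros [k ->]. exists (IZR k * (PI/2)); split; auto.
  destruct (Zeven_odd_dec k) as [He|Ho].
  - apply Zeven_ex in He. destruct He as [j ->]. exists j; right. rewrite mult_IZR; field.
  - apply Zodd_ex in Ho. destruct Ho as [j ->]. exists j; left. rewrite plus_IZR, mult_IZR; field.
Qed.

Lemma P3_F3 x : P3 x -> F3 x.
Proof.
  intros [k ->]. exists (IZR k * (PI/3)); split; auto.
  pose proof (Z.div_mod k 3 ltac:(lia)). pose proof (Z.mod_pos_bound k 3 ltac:(lia)).
  set (j := (k / 3)%Z) in *. set (r := (k mod 3)%Z) in *.
  assert (r = 0 \/ r = 1 \/ r = 2)%Z as [R|[R|R]] by lia; rewrite R in H; rewrite H.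
  - exists j. right; right. rewrite plus_IZR, mult_IZR; simpl; field.
  - exists j. left. rewrite plus_IZR, mult_IZR; simpl; field.
  - exists (j + 1)%Z. right; left. rewrite !plus_IZR, mult_IZR; simpl; field.
Qed.

Lemma sq_roots y c : y * y = c * c -> y = c \/ y = - c.
Proof. intro H. assert ((y - c) * (y + c) = 0) by nra. apply Rmult_integral in H0. destruct H0; [left|right]; lra. Qed.

Lemma P2_of x y : x*x + y*y = 1 -> (x = 0 \/ x = -1) -> P2 (x, y).
Proof.
  intros N [->| ->].
  - destruct (sq_roots y 1 ltac:(nra)) as [->| ->].
    + exists 1%Z. unfold Cexpi. rewrite Rmult_1_l, cos_PI2, sin_PI2; auto.
    + exists (-1)%Z. unfold Cexpi. replace (IZR (-1) * (PI/2)) with (- (PI/2)) by (simpl; ring).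
      rewrite cos_neg, sin_neg, cos_PI2, sin_PI2; auto.
  - assert (y = 0) by nra. subst. exists 2%Z. unfold Cexpi.
    replace (IZR 2 * (PI/2)) with PI by (simpl; field). rewrite cos_PI, sin_PI; auto.
Qed.

Lemma Cexpi_PI3 : Cexpi (PI/3) = (1/2, s3).
Proof. unfold Cexpi. rewrite cos_PI3, sin_PI3; auto. Qed.
Lemma Cexpi_2PI3 : Cexpi (2 * (PI/3)) = (-1/2, s3).
Proof. replace (2 * (PI/3)) with (PI/3 + PI/3) by ring. rewrite <- Cexpi_add, Cexpi_PI3.
  unfold Cmul; simpl. pose proof s3_sq. f_equal; lra. Qed.

Lemma P3_of x y : x*x + y*y = 1 -> (x = -1 \/ x = 1/2 \/ x = -1/2) -> P3 (x, y).
Proof.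
  pose proof s3_sq as S.
  intros N [->|[->| ->]].
  - assert (y = 0) by nra. subst. exists 3%Z. unfold Cexpi.
    replace (IZR 3 * (PI/3)) with PI by (simpl; field). rewrite cos_PI, sin_PI; auto.
  - destruct (sq_roots y s3 ltac:(nra)) as [->| ->].
    + exists 1%Z. rewrite Rmult_1_l, Cexpi_PI3; auto.
    + exists (-1)%Z. replace (IZR (-1) * (PI/3)) with (- (PI/3)) by (simpl; ring).
      rewrite <- Cexpi_inv, Cexpi_PI3, Cinv_norm1; simpl; auto. cx; lra.
  - destruct (sq_roots y s3 ltac:(nra)) as [->| ->].
    + exists 2%Z. rewrite Cexpi_2PI3; auto.
    + exists (-2)%Z. replace (IZR (-2) * (PI/3)) with (- (2 * (PI/3))) by (simpl; ring).
      rewrite <- Cexpi_inv, Cexpi_2PI3, Cinv_norm1; simpl; auto. cx; lra.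
Qed.

Fixpoint Cpow (z : Cx) (k : nat) : Cx := match k with O => Cone | S k => Cmul z (Cpow z k) end.

Lemma Cnorm2_pow z k : Cnorm2 (Cpow z k) = Cnorm2 z ^ k.
Proof. induction k; simpl. cx; ring. rewrite Cnorm2_mul, IHk; auto. Qed.

Lemma Pt_one n (a b : vec) : veq n b (Pt a b Cone).
Proof. intros i Hi. unfold Pt. destruct (a i), (b i); cx; f_equal; ring. Qed.

Lemma small_pow N S e : 0 <= N < 1 -> 0 < S -> 0 < e -> exists k, N ^ k * S < e.
Proof.
  intros HN HS He. destruct (pow_lt_1_zero N ltac:(rewrite Rabs_right; lra) (e / S) ltac:(apply Rdiv_lt_0_compat; lra)) as [K HK].
  exists K. specialize (HK K (le_n K)). rewrite Rabs_right in HK by (apply Rle_ge, pow_le; lra).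
  apply (Rmult_lt_compat_r S) in HK; auto. replace (e / S * S) with e in HK by (field; lra). auto.
Qed.

Lemma contract n a la b mu nu : ~ veq n a b ->
  closed_in n (orbit n (in_group2 a la b mu) a) ->
  discrete_in n (orbit n (in_group2 a la b mu) a) ->
  (forall l v, Gr la (Cinv la) mu (Cinv mu) l v ->
     Gr la (Cinv la) mu (Cinv mu) (Cmul nu l) (Cadd (Cmul nu (Csub v Cone)) Cone)) ->
  0 < Cnorm2 nu < 1 -> False.
Proof.
  intros Hab Hc Hd Hg HN. pose proof (Sd_pos n a b Hab) as HS.
  assert (Hp : forall k, Gr la (Cinv la) mu (Cinv mu) (Cpow nu k) (Csub Cone (Cpow nu k))).
  { induction k; simpl.
    - eapply Gr_ext; [constructor| auto |]. cx; f_equal; ring.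
    - eapply Gr_ext; [apply Hg, IHk| auto |]. generalize (Cpow nu k); intro p. clear -p. destruct nu as [x y], p; cx; f_equal; ring. }
  assert (Hdist : forall k, vdist n b (Pt a b (Csub Cone (Cpow nu k))) = sqrt (Cnorm2 nu ^ k * Sd n a b)).
  { intro k. rewrite (vdist_veq_l n _ _ _ (Pt_one n a b)), vdist_Pt, <- Cnorm2_pow. f_equal. f_equal.
    f_equal. destruct (Cpow nu k); cx; f_equal; ring. }
  assert (Hin : forall k, orbit n (in_group2 a la b mu) a (Pt a b (Csub Cone (Cpow nu k)))).
  { intro k. apply orbit_char. do 2 eexists; split; [apply Hp|]. intros i Hi; auto. }
  assert (Hb : orbit n (in_group2 a la b mu) a b).
  { apply Hc. intros e He. destruct (small_pow (Cnorm2 nu) (Sd n a b) (e * e)) as [k Hk]; try lra; try nra.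
    exists (Pt a b (Csub Cone (Cpow nu k))). split; auto. rewrite Hdist. apply sqrt_lt_sq; auto.
    apply Rmult_le_pos; [apply pow_le; lra | lra]. }
  destruct (Hd b Hb) as [e [He H]].
  destruct (small_pow (Cnorm2 nu) (Sd n a b) (e * e)) as [k Hk]; try lra; try nra.
  specialize (H _ (Hin k)). rewrite Hdist in H.
  assert (E : veq n (Pt a b (Csub Cone (Cpow nu k))) (Pt a b Cone)).
  { intros i Hi. rewrite H, (Pt_one n a b); auto. apply sqrt_lt_sq; auto.
    apply Rmult_le_pos; [apply pow_le; lra | lra]. }
  apply Pt_inj in E; auto.
  assert (Cnorm2 (Cpow nu k) = 0).
  { replace (Cpow nu k) with Czero. cx; ring. destruct (Cpow nu k); cx. injection E; intros; f_equal; lra. }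
  rewrite Cnorm2_pow in H0. pose proof (pow_lt (Cnorm2 nu) k ltac:(lra)). lra.
Qed.

Lemma norm_mu_1 n a la b mu : ~ veq n a b -> mu <> Czero ->
  closed_in n (orbit n (in_group2 a la b mu) a) ->
  discrete_in n (orbit n (in_group2 a la b mu) a) -> Cnorm2 mu = 1.
Proof.
  intros Hab Hm Hc Hd. pose proof (Cnorm2_pos _ Hm).
  destruct (Rtotal_order (Cnorm2 mu) 1) as [L|[E|G]]; auto; exfalso.
  - apply (contract n a la b mu mu); auto. intros; apply gr_g; auto.
  - apply (contract n a la b mu (Cinv mu)); auto. intros; apply gr_gi; auto.
    assert (Cnorm2 (Cinv mu) = / Cnorm2 mu).
    { unfold Cinv, Cnorm2 in *. destruct mu as [x y]; simpl in *. field. lra. }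
    rewrite H0. split; [apply Rinv_0_lt_compat; lra|]. rewrite <- Rinv_1. apply Rinv_lt_contravar; lra.
Qed.

Definition Rs (c : R) (t : Cx) : Cx := (c * fst t, c * snd t).

Lemma int_scal (Lp : Cx -> Prop) c d t0 :
  Lp Czero -> (forall s t, Lp s -> Lp t -> Lp (Cadd s t)) -> (forall t, Lp t -> Lp (Copp t)) ->
  (forall t, Lp t -> Lp (Rs c t)) -> Lp t0 -> t0 <> Czero -> 0 < d ->
  (forall t, Lp t -> Cnorm2 t < d -> t = Czero) -> exists m, c = IZR m.
Proof.
  intros H0 HA HO HC Ht0 Hnz Hd Hdisc.
  assert (Hnat : forall k t, Lp t -> Lp (Rs (INR k) t)).
  { induction k; intros t Ht.
    - replace (Rs (INR 0) t) with Czero; auto. unfold Rs; simpl; cx; f_equal; ring.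
    - replace (Rs (INR (S k)) t) with (Cadd (Rs (INR k) t) t); auto.
      rewrite S_INR. unfold Rs; destruct t; cx; f_equal; ring. }
  assert (Hz : forall k t, Lp t -> Lp (Rs (IZR k) t)).
  { intros k t Ht. destruct (Z.le_gt_cases 0 k).
    - rewrite <- (Z2Nat.id k), <- INR_IZR_INZ by lia. auto.
    - replace k with (- Z.of_nat (Z.to_nat (- k)))%Z by lia. rewrite opp_IZR, <- INR_IZR_INZ.
      replace (Rs (- INR (Z.to_nat (- k))) t) with (Copp (Rs (INR (Z.to_nat (- k))) t)); auto.
      unfold Rs; destruct t; cx; f_equal; ring. }
  set (m := (up (c + 1/2) - 1)%Z). exists m.
  destruct (archimed (c + 1/2)) as [A1 A2].
  assert (Hm : IZR m = IZR (up (c + 1/2)) - 1) by (unfold m; rewrite minus_IZR; auto).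
  set (r := c - IZR m).
  assert (Hr : -1/2 <= r < 1/2) by (unfold r; lra).
  assert (Hrs : forall t, Lp t -> Lp (Rs r t)).
  { intros t Ht. replace (Rs r t) with (Cadd (Rs c t) (Copp (Rs (IZR m) t))); auto.
    unfold r, Rs; destruct t; cx; f_equal; ring. }
  assert (Hpow : forall k, Lp (Rs (r ^ k) t0)).
  { induction k; simpl.
    - replace (Rs 1 t0) with t0; auto. unfold Rs; destruct t0; simpl; f_equal; ring.
    - replace (Rs (r * r ^ k) t0) with (Rs r (Rs (r ^ k) t0)); auto. unfold Rs; simpl; f_equal; ring. }
  destruct (Req_dec r 0) as [R0|R0]; [unfold r in R0; lra|exfalso].
  pose proof (Cnorm2_pos _ Hnz) as HN.
  destruct (pow_lt_1_zero (r * r) ltac:(rewrite Rabs_right; nra) (d / Cnorm2 t0) ltac:(apply Rdiv_lt_0_compat; lra)) as [K HK].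
  specialize (HK K (le_n K)). rewrite Rabs_right in HK by (apply Rle_ge, pow_le; nra).
  assert (E : Rs (r ^ K) t0 = Czero).
  { apply Hdisc; auto. replace (Cnorm2 (Rs (r ^ K) t0)) with ((r * r) ^ K * Cnorm2 t0).
    - apply (Rmult_lt_compat_r (Cnorm2 t0)) in HK; auto. replace (d / Cnorm2 t0 * Cnorm2 t0) with d in HK by (field; lra). auto.
    - rewrite Rpow_mult_distr. unfold Rs, Cnorm2; simpl; ring. }
  pose proof (pow_nonzero r K R0).
  apply Hnz. destruct t0 as [x y]. unfold Rs in E; simpl in E. injection E; intros.
  apply Rmult_integral in H1; apply Rmult_integral in H2.
  destruct H1, H2; try contradiction. subst; auto.
Qed.

Section Tr.
Variables la lai mu mui : Cx.
Hypothesis Hl : Cmul la lai = Cone.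
Hypothesis Hm : Cmul mu mui = Cone.

Definition Lt (t : Cx) := Gr la lai mu mui Cone t /\ Gr la lai mu mui Cone (Copp t).

Lemma Lt_zero : Lt Czero.
Proof. split; [constructor|]. eapply Gr_ext; [constructor|auto|]. cx; f_equal; ring. Qed.

Lemma Lt_add s t : Lt s -> Lt t -> Lt (Cadd s t).
Proof.
  intros [A B] [C D]; split.
  - eapply Gr_ext; [apply (Gr_comp _ _ _ _ _ _ _ _ A C)| |]; destruct s, t; cx; f_equal; ring.
  - eapply Gr_ext; [apply (Gr_comp _ _ _ _ _ _ _ _ B D)| |]; destruct s, t; cx; f_equal; ring.
Qed.

Lemma Lt_opp t : Lt t -> Lt (Copp t).
Proof. intros [A B]; split; auto. eapply Gr_ext; [exact A|auto|]. destruct t; cx; f_equal; ring. Qed.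

Lemma Lt_conj l1 v1 l2 v2 : Gr la lai mu mui l1 v1 -> Gr la lai mu mui l2 v2 ->
  Cmul l1 l2 = Cone -> Cadd (Cmul l1 v2) v1 = Czero -> forall t, Lt t -> Lt (Cmul l1 t).
Proof.
  intros G1 G2 E1 E2 t [A B].
  destruct l1 as [p q], l2 as [r s], v1 as [x y], v2 as [z w]. cx. injection E1; injection E2; intros.
  split.
  - eapply Gr_ext; [apply (Gr_comp _ _ _ _ _ _ _ _ (Gr_comp _ _ _ _ _ _ _ _ G1 A) G2)| |];
    destruct t; cx; f_equal; nsatz.
  - eapply Gr_ext; [apply (Gr_comp _ _ _ _ _ _ _ _ (Gr_comp _ _ _ _ _ _ _ _ G1 B) G2)| |];
    destruct t; cx; f_equal; nsatz.
Qed.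

Lemma Lt_eq u w : Lt u -> u = w -> Lt w.
Proof. intros H ->; auto. Qed.

Ltac dec := destruct la as [x1 y1], lai as [p1 q1], mu as [x2 y2], mui as [p2 q2]; cx;
  injection Hl; injection Hm; intros.

Lemma Lt_la t : Lt t -> Lt (Cmul la t).
Proof.
  intro H. eapply Lt_eq; [apply (Lt_conj _ _ _ _ (gr_f _ _ _ _ _ _ (gr_id _ _ _ _)) (gr_fi _ _ _ _ _ _ (gr_id _ _ _ _))); [ | | exact H]|].
  all: clear H; try (destruct t); dec; f_equal; nsatz.
Qed.
Lemma Lt_lai t : Lt t -> Lt (Cmul lai t).
Proof.
  intro H. eapply Lt_eq; [apply (Lt_conj _ _ _ _ (gr_fi _ _ _ _ _ _ (gr_id _ _ _ _)) (gr_f _ _ _ _ _ _ (gr_id _ _ _ _))); [ | | exact H]|].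
  all: clear H; try (destruct t); dec; f_equal; nsatz.
Qed.
Lemma Lt_mu t : Lt t -> Lt (Cmul mu t).
Proof.
  intro H. eapply Lt_eq; [apply (Lt_conj _ _ _ _ (gr_g _ _ _ _ _ _ (gr_id _ _ _ _)) (gr_gi _ _ _ _ _ _ (gr_id _ _ _ _))); [ | | exact H]|].
  all: clear H; try (destruct t); dec; f_equal; nsatz.
Qed.
Lemma Lt_mui t : Lt t -> Lt (Cmul mui t).
Proof.
  intro H. eapply Lt_eq; [apply (Lt_conj _ _ _ _ (gr_gi _ _ _ _ _ _ (gr_id _ _ _ _)) (gr_g _ _ _ _ _ _ (gr_id _ _ _ _))); [ | | exact H]|].
  all: clear H; try (destruct t); dec; f_equal; nsatz.
Qed.

Lemma Lt_t0 : Lt (Cmul (Csub Cone mu) (Csub la Cone)).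
Proof.
  split.
  - eapply Gr_ext; [apply gr_f, gr_g, gr_fi, gr_gi, gr_id| |]; dec; f_equal; nsatz.
  - eapply Gr_ext; [apply gr_g, gr_f, gr_gi, gr_fi, gr_id| |]; dec; f_equal; nsatz.
Qed.
End Tr.

Lemma Gr_lin (Lam : Cx -> Prop) la lai mu mui :
  Lam Cone -> Lam la -> Lam lai -> Lam mu -> Lam mui ->
  (forall u w, Lam u -> Lam w -> Lam (Cmul u w)) ->
  forall l v, Gr la lai mu mui l v -> Lam l.
Proof. intros H1 Hla Hlai Hmu Hmui HM l v H; induction H; auto. Qed.

Lemma SR_from (F : Cx -> Prop) n a la b mu :
  (forall l v, Gr la (Cinv la) mu (Cinv mu) l v -> F l) ->
  forall h, in_group2 a la b mu h -> in_SR F n h.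
Proof.
  intros HF h Hh. destruct (G2Gr a la b mu h Hh) as [l [v [Hg He]]].
  exists l, (fun i => Csub (Pt a b v i) (Cmul l (a i))). split; [eapply HF; eauto|].
  intros z i Hi. rewrite He. destruct (z i), (a i), (Pt a b v i), l; cx; f_equal; ring.
Qed.

Lemma rs1 (l t : Cx) : Cadd (Cmul l t) (Cmul (fst l, - snd l) t) = Rs (2 * fst l) t.
Proof. destruct l, t; unfold Rs; cx; f_equal; ring. Qed.
Lemma rs3 l m t : Cadd (Cmul l (Cmul m t)) (Cmul (fst l, - snd l) (Cmul (fst m, - snd m) t))
  = Rs (2*(fst l * fst m - snd l * snd m)) t.
Proof. destruct l, m, t; unfold Rs; cx; f_equal; ring. Qed.
Lemma rs4 l m t : Cadd (Cmul l (Cmul (fst m, - snd m) t)) (Cmul (fst l, - snd l) (Cmul m t))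
  = Rs (2*(fst l * fst m + snd l * snd m)) t.
Proof. destruct l, m, t; unfold Rs; cx; f_equal; ring. Qed.

Lemma mul_inv1 z : Cnorm2 z = 1 -> Cmul z (Cinv z) = Cone.
Proof. intro H. rewrite Cinv_norm1 by auto. destruct z; cx; f_equal; lra. Qed.

Lemma hard_dir n theta mu a b :
  in_piQnotZ theta -> mu <> Czero -> mu <> Cone -> ~ veq n a b ->
  closed_in n (orbit n (in_group2 a (Cexpi theta) b mu) a) ->
  discrete_in n (orbit n (in_group2 a (Cexpi theta) b mu) a) ->
  ((forall h, in_group2 a (Cexpi theta) b mu h -> in_SR F2 n h) \/
   (forall h, in_group2 a (Cexpi theta) b mu h -> in_SR F3 n h)).
Proof.
  intros Hth Hm0 Hm1 Hab Hc Hd.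
  set (la := Cexpi theta) in *.
  assert (Nla : Cnorm2 la = 1).
  { unfold la, Cexpi, Cnorm2; simpl. rewrite <- (sin2_cos2 theta). unfold Rsqr; ring. }
  assert (Nmu : Cnorm2 mu = 1) by (eapply norm_mu_1; eauto).
  assert (Hla1 : la <> Cone).
  { intro E. assert (sin theta = 0) by (unfold la, Cexpi, Cone in E; injection E; auto).
    apply sin_eq_0_0 in H. destruct H as [k Hk]. destruct Hth as [p [q [Hq [Hnd Ht]]]].
    apply Hnd. exists k. rewrite Ht in Hk. pose proof PI_RGT_0.
    assert (IZR q <> 0) by (apply not_0_IZR; auto).
    assert (HH : IZR p = IZR k * IZR q).
    { apply (Rmult_eq_reg_l PI); [|lra]. field_simplify_eq in Hk; auto. lra. }
    rewrite <- mult_IZR in HH. apply eq_IZR in HH. auto. }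
  set (lai := Cinv la) in *. set (mui := Cinv mu) in *.
  assert (Hl : Cmul la lai = Cone) by (apply mul_inv1; auto).
  assert (Hm : Cmul mu mui = Cone) by (apply mul_inv1; auto).
  assert (Elai : lai = (fst la, - snd la)) by (apply Cinv_norm1; auto).
  assert (Emui : mui = (fst mu, - snd mu)) by (apply Cinv_norm1; auto).
  pose proof (Sd_pos n a b Hab) as HS.
  assert (Ha : orbit n (in_group2 a la b mu) a a).
  { apply orbit_char. exists Cone, Czero; split; [constructor|]. intros i Hi; unfold Pt.
    destruct (a i), (b i); cx; f_equal; ring. }
  destruct (Hd a Ha) as [e [He Hde]].
  assert (Hdisc : forall t, Lt la lai mu mui t -> Cnorm2 t < e * e / Sd n a b -> t = Czero).
  { intros t [Gt _] Ht. assert (O : orbit n (in_group2 a la b mu) a (Pt a b t)).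
    { apply orbit_char. exists Cone, t; split; auto. intros i Hi; auto. }
    specialize (Hde _ O).
    assert (V : veq n (Pt a b t) (Pt a b Czero)).
    { intros i Hi. rewrite Hde; auto.
      - unfold Pt. destruct (a i), (b i); cx; f_equal; ring.
      - rewrite (vdist_veq_l n a (Pt a b Czero)), vdist_Pt.
        + apply sqrt_lt_sq; [apply Rmult_le_pos; [apply Cnorm2_nonneg|lra]|auto|].
          replace (Cnorm2 (Csub Czero t)) with (Cnorm2 t) by (destruct t; cx; ring).
          apply (Rmult_lt_compat_r (Sd n a b)) in Ht; auto.
          replace (e * e / Sd n a b * Sd n a b) with (e * e) in Ht by (field; lra). auto.
        + intros j Hj; unfold Pt. destruct (a j), (b j); cx; f_equal; ring. }
    apply Pt_inj in V; auto. }
  assert (Hdpos : 0 < e * e / Sd n a b) by (apply Rdiv_lt_0_compat; nra).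
  set (t0 := Cmul (Csub Cone mu) (Csub la Cone)).
  assert (Ht0 : Lt la lai mu mui t0) by (apply Lt_t0; auto).
  assert (Ht0nz : t0 <> Czero).
  { intro E. assert (Cnorm2 t0 = 0) by (rewrite E; cx; ring). unfold t0 in H.
    rewrite Cnorm2_mul in H. apply Rmult_integral in H. destruct H as [H|H]; apply Cnorm2_0 in H.
    - apply Hm1. destruct mu; cx; injection H; intros; f_equal; lra.
    - apply Hla1. destruct la; cx; injection H; intros; f_equal; lra. }
  assert (INT : forall c, (forall t, Lt la lai mu mui t -> Lt la lai mu mui (Rs c t)) -> exists m, c = IZR m).
  { intros c Hc'. apply (int_scal (Lt la lai mu mui) c (e * e / Sd n a b) t0); auto.
    - apply Lt_zero.
    - intros; apply (Lt_add la lai mu mui Hl Hm); auto.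
    - intros; apply Lt_opp; auto. }
  destruct (INT (2 * fst la)) as [m1 E1].
  { intros t Ht. rewrite <- rs1, <- Elai. apply (Lt_add la lai mu mui Hl Hm); [apply (Lt_la la lai mu mui Hl Hm)|apply (Lt_lai la lai mu mui Hl Hm)]; auto. }
  destruct (INT (2 * fst mu)) as [m2 E2].
  { intros t Ht. rewrite <- rs1, <- Emui. apply (Lt_add la lai mu mui Hl Hm); [apply (Lt_mu la lai mu mui Hl Hm)|apply (Lt_mui la lai mu mui Hl Hm)]; auto. }
  destruct (INT (2 * (fst la * fst mu - snd la * snd mu))) as [m3 E3].
  { intros t Ht. rewrite <- rs3, <- Elai, <- Emui. apply (Lt_add la lai mu mui Hl Hm).
    - apply (Lt_la la lai mu mui Hl Hm); auto; apply (Lt_mu la lai mu mui Hl Hm); auto.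
    - apply (Lt_lai la lai mu mui Hl Hm); auto; apply (Lt_mui la lai mu mui Hl Hm); auto. }
  destruct (INT (2 * (fst la * fst mu + snd la * snd mu))) as [m4 E4].
  { intros t Ht. rewrite <- rs4, <- Elai, <- Emui. apply (Lt_add la lai mu mui Hl Hm).
    - apply (Lt_la la lai mu mui Hl Hm); auto; apply (Lt_mui la lai mu mui Hl Hm); auto.
    - apply (Lt_lai la lai mu mui Hl Hm); auto; apply (Lt_mu la lai mu mui Hl Hm); auto. }
  assert (Nla' : fst la * fst la + snd la * snd la = 1) by exact Nla.
  assert (Nmu' : fst mu * fst mu + snd mu * snd mu = 1) by exact Nmu.
  assert (C1 : (fst la, snd la) <> Cone) by (destruct la; auto).
  assert (C2 : (fst mu, snd mu) <> Cone) by (destruct mu; auto).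
  destruct (core _ _ _ _ _ _ _ _ Nla' Nmu' C1 C2 E1 E2 E3 E4) as [[X1 X2]|[X1 X2]].
  - left. apply SR_from. intros l v Hg. apply P2_F2.
    apply (Gr_lin P2 la (Cinv la) mu (Cinv mu)) with (v := v); auto using P2_one, P2_mul, P2_inv.
    + replace la with (fst la, snd la) by (destruct la; auto). apply P2_of; auto.
    + apply P2_inv. replace la with (fst la, snd la) by (destruct la; auto). apply P2_of; auto.
    + replace mu with (fst mu, snd mu) by (destruct mu; auto). apply P2_of; auto.
    + apply P2_inv. replace mu with (fst mu, snd mu) by (destruct mu; auto). apply P2_of; auto.
  - right. apply SR_from. intros l v Hg. apply P3_F3.
    apply (Gr_lin P3 la (Cinv la) mu (Cinv mu)) with (v := v); auto using P3_one, P3_mul, P3_inv.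
    + replace la with (fst la, snd la) by (destruct la; auto). apply P3_of; auto.
    + apply P3_inv. replace la with (fst la, snd la) by (destruct la; auto). apply P3_of; auto.
    + replace mu with (fst mu, snd mu) by (destruct mu; auto). apply P3_of; auto.
    + apply P3_inv. replace mu with (fst mu, snd mu) by (destruct mu; auto). apply P3_of; auto.
Qed.

Theorem proposition3p4 (n : nat) (theta : R) (mu : Cx) (a b : vec) :
  in_piQnotZ theta ->
  mu <> Czero -> mu <> Cone ->
  ~ veq n a b ->
  (closed_in n (orbit n (in_group2 a (Cexpi theta) b mu) a) /\
   discrete_in n (orbit n (in_group2 a (Cexpi theta) b mu) a))
  <->
  ((forall h, in_group2 a (Cexpi theta) b mu h -> in_SR F2 n h) \/
   (forall h, in_group2 a (Cexpi theta) b mu h -> in_SR F3 n h)).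
Proof.
  intros Hth Hm0 Hm1 Hab. split.
  - intros [Hc Hd]. apply hard_dir; auto.
  - apply easy_dir; auto.
Qed.
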